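(* Let $r\ne p$ be primes and $H$ a finite group with $\pi(H)=\{r,p\}$ such that $r-p\in\overline{\Gamma}(H)$. Then $H$ is either a Frobenius group or a $2$-Frobenius group. Moreover: (1) if $H$ has a nontrivial normal $p$-subgroup, then $H$ is Frobenius of type $(r,p)$ or $2$-Frobenius of type $(p,r,p)$; (2) if there is $N\unlhd H$ with $H/N$ a nontrivial $r$-group, then $H$ is Frobenius of type $(r,p)$ or $2$-Frobenius of type $(r,p,r)$; (3) if both hypotheses of (1) and (2) hold, then $H$ is Frobenius of type $(r,p)$.
   Context: $\overline{\Gamma}(H)$ is the graph on the prime divisors of $|H|$ where distinct $p,q$ are adjacent iff $H$ has no element of order $pq$. A group $G$ is $2$-Frobenius if there is a normal series $1\unlhd F_1\unlhd F_2\unlhd G$ such that $G/F_1$ is a Frobenius group with kernel $F_2/F_1$ and $F_2$ is a Frobenius group with kernel $F_1$; $G/F_1$ and $F_2$ are the upper and lower Frobenius groups. A Frobenius group is of type $(p,q)$ if its complement is a $p$-group and its kernel a $q$-group; a $2$-Frobenius group is of type $(p,q,r)$ if its upper Frobenius group is of type $(p,q)$ and its lower Frobenius group is of type $(q,r)$. *)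

(* Defs.v *)
From mathcomp Require Import all_boot fingroup morphism quotient pgroup frobenius.
Set Implicit Arguments.
Unset Strict Implicit.
Unset Printing Implicit Defensive.
Local Open Scope group_scope.

(* Adjacency of distinct primes p, q in the complement prime graph
   \overline{Gamma}(H): both divide |H|, p <> q, and H has no element of
   order p*q. *)
Definition cpg_adj (gT : finGroupType) (H : {set gT}) (p q : nat) : Prop :=
  [/\ p \in \pi(#|H|), q \in \pi(#|H|), p != q &
      ~ (exists2 x, x \in H & #[x] = (p * q)%N)].

Definition Frobenius_of_type (gT : finGroupType) (G : {set gT}) (p q : nat) : Prop :=
  exists K U : {group gT}, [/\ [Frobenius G = K ><| U], p.-group U & q.-group K].

Definition two_Frobenius (gT : finGroupType) (G : {group gT}) : Prop :=
  exists F1 F2 : {group gT},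
    [/\ F1 <| G, F2 <| G,
        [Frobenius (G / F1) with kernel (F2 / F1)] &
        [Frobenius F2 with kernel F1]].

Definition two_Frobenius_of_type (gT : finGroupType) (G : {group gT})
    (p q r : nat) : Prop :=
  exists F1 F2 : {group gT},
    [/\ F1 <| G, F2 <| G,
        exists U : {group coset_of F1},
          [/\ [Frobenius (G / F1) = (F2 / F1) ><| U], p.-group U
            & q.-group (F2 / F1)] &
        exists W : {group gT},
          [/\ [Frobenius F2 = F1 ><| W], q.-group W & r.-group F1]].

(* Main.v *)
Require Import Defs.
From mathcomp Require Import all_boot fingroup morphism quotient pgroup frobenius.
From mathcomp Require Import all_fingroup all_solvable.
From mathcomp Require Import ssralg zify.
From mathcomp Require Import integral_char.
Set Implicit Arguments.
Unset Strict Implicit.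
Unset Printing Implicit Defensive.
Local Open Scope group_scope.
Import GRing.Theory.
Section Cross.
Variables (gT : finGroupType) (H : {group gT}) (a b : nat).
Hypotheses (pr_a : prime a) (pr_b : prime b) (neq_ab : a != b).
Hypothesis noel : forall x, x \in H -> #[x] != (a * b)%N.

Lemma cross (X Y : {group gT}) : X \subset H -> Y \subset H ->
  a.-group X -> b.-group Y -> X \subset 'C(Y) -> X :=: 1 \/ Y :=: 1.
Proof.
move=> sXH sYH aX bY cXY.
have [-> | ntX] := eqsVneq X 1; first by left.
have [-> | ntY] := eqsVneq Y 1; first by right.
have [_ aX1 _] := pgroup_pdiv aX ntX; have [_ bY1 _] := pgroup_pdiv bY ntY.
have [x Xx ox] := Cauchy pr_a aX1; have [y Yy oy] := Cauchy pr_b bY1.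
have cxy : commute x y by apply: (centP (subsetP cXY x Xx)).
have := noel (groupM (subsetP sXH x Xx) (subsetP sYH y Yy)).
by rewrite orderM // ?ox ?oy ?eqxx // prime_coprime // dvdn_prime2.
Qed.
End Cross.
Lemma sum_cycles (gT : finGroupType) (M : nmodType) (E : {group gT}) (a : nat)
  (g : gT -> M) : prime a -> a.-abelem E ->
  (\sum_(F in [set <[e]> | e in E^#]) \sum_(f in F) g f =
   g 1%g *+ #|[set <[e]> | e in E^#]| + \sum_(f in E^#) g f)%R.
Proof.
move=> pr_a abE; set FF := [set <[e]> | e in E^#].
rewrite (eq_bigr (fun F => g 1%g + \sum_(f in F^#) g f)%R); last first.
  move=> _ /imsetP[e Ee ->]; rewrite (bigD1 1) ?group1 //=; congr (_ + _)%R.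
  by apply: eq_bigl => f; rewrite !inE andbC.
rewrite big_split sumr_const /=; congr (_ + _)%R.
rewrite [RHS](partition_big (fun f => <[f]>) (mem FF)) /=; last first.
  by move=> f Ef; apply: imset_f.
apply: eq_bigr => _ /imsetP[e Ee ->].
apply: eq_bigl => f; rewrite [RHS]andbC !inE.
have [-> | ntf] /= := eqVneq f 1; first by rewrite andbF.
have [nte Ee'] := setD1P Ee.
apply/idP/andP => [ef | [/eqP <- _]]; last exact: cycle_id.
have Ef : f \in E by apply: subsetP ef; rewrite cycle_subG.
split=> //; rewrite eqEcard cycle_subG ef /= -!orderE.
by rewrite (abelem_order_p abE Ef ntf) (abelem_order_p abE Ee' nte).
Qed.

Import FiniteModule.

Lemma abelem2_regular (gT : finGroupType) (V E : {group gT}) (a : nat) :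
  prime a -> abelian V -> E \subset 'N(V) -> coprime #|V| a -> a.-abelem E ->
  #|E| = (a ^ 2)%N -> (forall e, e \in E^# -> 'C_V[e] = 1) -> V :=: 1.
Proof.
move=> pr_a abV nVE coVa abE oE regE.
have sigma0 (F : {group gT}) f0 (u : fmod_of abV) :
    F \subset E -> f0 \in F^# -> (\sum_(f in F) u ^@ f = 0)%R.
  move=> sFE /setD1P[ntf0 Ff0]; set s := (\sum_(f in F) u ^@ f)%R.
  have Nf0 : f0 \in 'N(V) by apply: subsetP nVE _ (subsetP sFE _ Ff0).
  have sJ : (s ^@ f0 = s)%R.
    rewrite /s actr_sum [RHS](reindex_inj (mulIg f0)) /=.
    apply: eq_big => [f | f Ff]; first by rewrite groupMr.
    by rewrite actrM // (subsetP nVE) // (subsetP sFE).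
  apply: val_inj; rewrite fmval0 /=.
  have : val s \in 'C_V[f0].
    rewrite inE fmodP /=; apply/cent1P; apply/commgP; apply/conjg_fixP.
    by rewrite -fmvalJ // sJ.
  rewrite (regE f0); last by rewrite !inE ntf0 (subsetP sFE).
  by move/set1P.
set FF := [set <[e]> | e in E^#].
have cardFF : #|FF| = a.+1.
  have := sum_cycles (M := nat) (fun _ => 1%N) pr_a abE; rewrite -/FF.
  rewrite (eq_bigr (fun _ => a)); last first.
    move=> _ /imsetP[e /setD1P[nte Ee] ->]; rewrite sumr_const.
    by rewrite -orderE (abelem_order_p abE Ee nte) /= natn.
  rewrite !sumr_const /= !natn.
  rewrite -mulr_natr natn /= => h.
  have hE := cardsD1 1 E; rewrite group1 oE /= in hE.
  have a1 := prime_gt1 pr_a.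
  move: h hE; set F := #|FF|; set e1 := #|E^#|; rewrite expnS expn1 => h hE.
  nia.
have key (u : fmod_of abV) : (u *+ a = 0)%R.
  have := sum_cycles (fun f => u ^@ f)%R pr_a abE; rewrite -/FF cardFF.
  rewrite big1 => [|_ /imsetP[e /setD1P[nte Ee] ->]]; last first.
    by apply: (sigma0 _ e); rewrite ?cycle_subG // !inE nte cycle_id.
  have [e Ee] : exists e, e \in E^#.
    apply/card_gt0P; have := cardsD1 1 E; rewrite group1 oE expnS expn1 /=.
    have := prime_gt1 pr_a; move: #|E^#| => k h1 h2; nia.
  have := sigma0 E e u (subxx E) Ee; rewrite (bigD1 1) ?group1 //= actr1.
  have -> : (\sum_(i in E | i != 1%g) u ^@ i = \sum_(f in E^#) u ^@ f)%R.
    by apply: eq_bigl => f; rewrite !inE andbC.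
  by move=> h1; rewrite mulrSr -addrA h1 addr0.
apply/trivgP/subsetP => x Vx; rewrite inE.
have := congr1 fmval (key (fmod abV x)); rewrite fmvalZ fmval0 fmodK // => h.
by rewrite -(expgK coVa Vx) h expg1n.
Qed.
Lemma Frob_absorb (gT : finGroupType) (G K U N : {group gT}) :
  [Frobenius G = K ><| U] -> solvable K -> N <| G -> U \subset N -> G \subset N.
Proof.
move=> frobG solK nsNG sUN.
have [defG ntK ntU _ _] := Frobenius_context frobG.
have [nsKG sUG defKU nKU tiKU] := sdprod_context defG.
have [sNG nNG] := andP nsNG; have [sKG nKG] := andP nsKG.
have nsMG : K :&: N <| G by apply: normalI.
have nMG := normal_norm nsMG.
have sRM : [~: K, U] \subset K :&: N.
  rewrite subsetI commg_subl nKU /=.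
  apply: subset_trans (commgS K sUN) _; rewrite commg_subr.
  exact: subset_trans sKG nNG.
have := coprime_norm_quotient_cent nKU (subset_trans sUG nMG)
  (coprimeSg (subsetIl K N) (coprimegS (subxx U) (Frobenius_coprime frobG)))
  (solvableS (subsetIl K N) solK).
rewrite (Frobenius_trivg_cent frobG) quotient1 (setIidPl (quotient_cents2r sRM)).
move/esym/eqP; rewrite -subG1 quotient_sub1 ?(subset_trans sKG nMG) // => sKM.
rewrite -defKU mulG_subG sUN andbT; exact: subset_trans sKM (subsetIr K N).
Qed.

Lemma pquot_sub (gT : finGroupType) (H N X : {group gT}) (p r : nat) :
  p != r -> N <| H -> r.-group (H / N) -> X \subset H -> p.-group X ->
  X \subset N.
Proof.
move=> npr nsNH rHN sXH pX; have nNX := subset_trans sXH (normal_norm nsNH).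
rewrite -quotient_sub1 // subG1 trivg_card1; apply/eqP; apply: (pnat_1 (quotient_pgroup N pX)).
apply: sub_pgroup (pgroupS (quotientS N sXH) rHN) => q; rewrite !inE => /eqP ->.
by rewrite eq_sym.
Qed.

Lemma noquot_Frob (gT : finGroupType) (H N : {group gT}) (p r : nat) :
  p != r -> Frobenius_of_type H p r -> N <| H -> r.-group (H / N) -> H / N = 1.
Proof.
move=> npr [K [U [frobH pU rK]]] nsNH rHN.
have [defH _ _ _ _] := Frobenius_context frobH.
have [_ sUH _ _ _] := sdprod_context defH.
have sHN := Frob_absorb frobH (pgroup_sol rK) nsNH (pquot_sub npr nsNH rHN sUH pU).
by apply/trivgP; rewrite quotient_sub1 ?normal_norm.
Qed.

Lemma noquot_2Frob (gT : finGroupType) (H N : {group gT}) (p r : nat) :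
  p != r -> two_Frobenius_of_type H p r p -> N <| H -> r.-group (H / N) -> H / N = 1.
Proof.
move=> npr [F1 [F2 [nsF1 nsF2 [U [frobU pU rF21]] [W [frobW rW pF1]]]]] nsNH rHN.
have [sF1H nF1H] := andP nsF1.
have sF1N := pquot_sub npr nsNH rHN sF1H pF1.
have [defHb _ _ _ _] := Frobenius_context frobU.
have [_ sUHb _ _ _] := sdprod_context defHb.
have sUN : U \subset coset F1 @* 'N(F1).
  by apply: subset_trans sUHb _; apply: morphimS.
set Uh := coset F1 @*^-1 U.
have sUhH : Uh \subset H.
  by rewrite -(quotientGK nsF1) morphpreS.
have pUh : p.-group Uh.
  by rewrite /pgroup card_morphpre // ker_coset pnatM; apply/andP; split.
have sUhN := pquot_sub npr nsNH rHN sUhH pUh.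
have sUNb : U \subset N / F1 by rewrite -(morphpreK sUN) morphimS.
have sHN : H / F1 \subset N / F1.
  apply: Frob_absorb frobU (pgroup_sol rF21) (quotient_normal F1 nsNH) sUNb.
rewrite quotientSGK // in sHN.
by apply/trivgP; rewrite quotient_sub1 ?normal_norm.
Qed.
Lemma L0 (gT : finGroupType) (G : {group gT}) (a b : nat) :
  solvable G -> G :!=: 1 ->
  (forall q, q \in \pi(#|G|) -> (q == a) || (q == b)) ->
  'O_b(G) = 1 -> 'O_a(G) != 1.
Proof.
move=> solG ntG piG Ob1.
have [M [sMG nsMG ntM abM]] := solvable_norm_abelem solG (normal_refl G) ntG.
have [q pr_q abq] := is_abelemP abM.
have qM := abelem_pgroup abq.
have sMO := pcore_max qM nsMG.
have [_ qdM _] := pgroup_pdiv qM ntM.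
have : q \in \pi(#|G|) by rewrite mem_primes pr_q cardG_gt0 (dvdn_trans qdM (cardSg sMG)).
move/piG => /orP[/eqP eqa | /eqP eqb].
  by subst q; apply: contraNneq ntM => Oa1; rewrite -subG1 -Oa1.
by subst q; rewrite Ob1 subG1 in sMO; rewrite sMO in ntM.
Qed.

Section Main.
Variables (gT : finGroupType) (H : {group gT}) (a b : nat).
Hypotheses (pr_a : prime a) (pr_b : prime b) (neq_ab : a != b).
Hypothesis piH : forall q, q \in \pi(#|H|) -> (q == a) || (q == b).
Hypothesis aH : a %| #|H|.
Hypothesis solH : solvable H.
Hypothesis noel : forall x, x \in H -> #[x] != (a * b)%N.

Let noel' : forall x, x \in H -> #[x] != (b * a)%N.
Proof. by move=> x Hx; rewrite mulnC noel. Qed.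

Let eq_sym_neq (x y : nat) : x != y -> y != x. Proof. by rewrite eq_sym. Qed.
Let crossA := cross pr_a pr_b neq_ab noel.
Let crossB := cross pr_b pr_a (eq_sym_neq neq_ab) noel'.

Let a'b (X : {group gT}) : X \subset H -> a^'.-group X -> b.-group X.
Proof.
move=> sXH; apply: sub_in_pnat => q piXq; rewrite !inE => nqa.
have /piH : q \in \pi(#|H|) by apply: (pi_of_dvd (cardSg sXH)) piXq.
by rewrite (negbTE nqa).
Qed.

Let b'a (X : {group gT}) : X \subset H -> b^'.-group X -> a.-group X.
Proof.
move=> sXH; apply: sub_in_pnat => q piXq; rewrite !inE => nqb.
have /piH : q \in \pi(#|H|) by apply: (pi_of_dvd (cardSg sXH)) piXq.
by rewrite (negbTE nqb) orbF.
Qed.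

Let bnat_a' n : b.-nat n -> a^'.-nat n.
Proof. by apply: sub_in_pnat => q _; rewrite !inE => /eqP->; rewrite eq_sym. Qed.

Let anat_b' n : a.-nat n -> b^'.-nat n.
Proof. by apply: sub_in_pnat => q _; rewrite !inE => /eqP->. Qed.

Lemma mainM : 'O_b(H) != 1 ->
  Frobenius_of_type H a b \/ two_Frobenius_of_type H b a b.
Proof.
move=> ntP.
have [P [defP nsPH bP]] : exists P : {group gT}, [/\ P :=: 'O_b(H), P <| H & b.-group P].
  by exists 'O_b(H)%G; split; rewrite ?pcore_normal ?pcore_pgroup.
rewrite -defP in ntP *.
have [sPH nPH] := andP nsPH.
have [K [nsKH sPK defKP]] : exists K : {group gT},
    [/\ K <| H, P \subset K & K / P = 'O_a(H / P)].
  exists 'O_{b, a}(H)%G; split; first exact: pseries_normal.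
    by rewrite defP -pseries1 (pseries_sub_catl [:: _] [:: _]).
  by rewrite defP -pseries1 (quotient_pseries [:: _]).
have [sKH nKH] := andP nsKH.
have aKP : a.-group (K / P) by rewrite defKP pcore_pgroup.
have ntKP : K / P != 1.
  rewrite defKP; apply: L0 (quotient_sol _ solH) _ _ _; last by rewrite defP; apply: trivg_pcore_quotient.
    apply: contraNneq ntP => HP1; have sHP : H \subset P.
      by rewrite -quotient_sub1 // HP1.
    have /pnat_dvd/(_ (pgroupS sHP bP)) : a %| #|H| by [].
    by rewrite pnatE // inE (negbTE neq_ab).
  move=> q piq; apply: piH; apply: (pi_of_dvd _ (cardG_gt0 H)) piq.
  by rewrite card_quotient // dvdn_indexg.
have nKP : K \subset 'N(P) := subset_trans sKH nPH.
have hallP : Hall K P.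
  rewrite /Hall sPK -card_quotient //=.
  exact: pnat_coprime bP (anat_b' aKP).
have nsPK : P <| K := normalS sPK sKH nsPH.
have [R0] := splitsP (SchurZassenhaus_split hallP nsPK).
case/complP => tiPR defPR.
have sRK : R0 \subset K by rewrite -defPR mulG_subr.
have sRH := subset_trans sRK sKH.
have defK : P ><| R0 = K by rewrite sdprodE // (subset_trans sRH nPH).
have oR : #|R0| = #|K / P| by rewrite card_quotient // -(index_sdprod defK).
have aR : a.-group R0 by rewrite /pgroup oR.
have ntR : R0 :!=: 1 by rewrite -cardG_gt1 oR cardG_gt1.
have sylR : a.-Sylow(K) R0.
  have iKR : #|K : R0| = #|P|.
    apply/eqP; rewrite -(eqn_pmul2l (cardG_gt0 R0)) Lagrange //.
    by rewrite mulnC (sdprod_card defK).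
  by rewrite /pHall sRK aR /= iKR bnat_a'.
have frobK : [Frobenius K = P ><| R0].
  apply/Frobenius_semiregularP => // x /setD1P[ntx Rx].
  have sCP : 'C_P[x] \subset P := subsetIl _ _.
  have Hx : <[x]> \subset H by rewrite cycle_subG (subsetP sRH).
  have := crossB (subset_trans sCP sPH) Hx (pgroupS sCP bP).
  have ax : a.-group <[x]> by apply: pgroupS aR; rewrite cycle_subG.
  case/(_ ax) => [|//|]; first by rewrite cent_cycle subsetIr.
  by move/(congr1 val)/eqP => x1; case/negP: ntx; rewrite -cycle_eq1; exact: x1.
set L := 'N_H(R0).
have sLH : L \subset H := subsetIl _ _.
have nRL : L \subset 'N(R0) := subsetIr _ _.
have nPL : L \subset 'N(P) := subset_trans sLH nPH.
have sRL : R0 \subset L by rewrite subsetI sRH normG.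
have nsRL : R0 <| L by rewrite /normal sRL nRL.
have defPL : P * L = H.
  by rewrite -{1}(Frattini_arg nsKH sylR) -defPR -mulgA (mulSGid sRL).
have tiPL : P :&: L = 1.
  have sXP : P :&: L \subset P := subsetIl _ _.
  have cXR : P :&: L \subset 'C(R0).
    apply/commG1P/trivgP; rewrite -tiPR commg_subI //.
      by rewrite setIS.
    by rewrite subsetI subxx (subset_trans sRH nPH).
  have := crossB (subset_trans sXP sPH) sRH (pgroupS sXP bP) aR cXR.
  by case=> // R1; rewrite R1 eqxx in ntR.
have defH : P ><| L = H by rewrite sdprodE.
set Z := 'Z(R0).
have sZR : Z \subset R0 := center_sub _.
have ntZ : Z != 1 by rewrite /Z (center_nil_eq1 (pgroup_nil aR)).
have cycZ : cyclic Z.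
  apply: contraR ntP => ncycZ.
  have abZ : abelian Z := center_abelian _.
  have aZ : a.-group Z := pgroupS sZR aR.
  have : 1 < 'r_a(Z) by rewrite -(rank_pgroup aZ) ltnNge -abelian_rank1_cyclic.
  case/p_rank_geP => E /pnElemP[sEZ abE logE].
  have oE : #|E| = (a ^ 2)%N by rewrite (card_pgroup (abelem_pgroup abE)) logE.
  have sEH : E \subset H := subset_trans sEZ (subset_trans sZR sRH).
  have sVP : 'Z(P) \subset P := center_sub _.
  have bV : b.-group 'Z(P) := pgroupS sVP bP.
  have V1 : 'Z(P) = 1.
    apply: (abelem2_regular pr_a (center_abelian _)).
    - exact: char_norm_trans (center_char P) (subset_trans sEH nPH).
    - rewrite coprime_sym prime_coprime //; apply/negP => /pnat_dvd/(_ bV).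
      by rewrite pnatE // inE (negbTE neq_ab).
    - exact: abE.
    - exact: oE.
    move=> e /setD1P[nte Ee].
    have sCV : 'C_('Z(P))[e] \subset P := subset_trans (subsetIl _ _) sVP.
    have He : <[e]> \subset H by rewrite cycle_subG (subsetP sEH).
    have ae : a.-group <[e]> by apply: pgroupS (abelem_pgroup abE); rewrite cycle_subG.
    case: (crossB (subset_trans sCV sPH) He (pgroupS sCV bP) ae) => [|//|].
      by rewrite cent_cycle subsetIr.
    by move/(congr1 val)/eqP => e1; case/negP: nte; rewrite -cycle_eq1; exact: e1.
  by rewrite (trivg_center_pgroup bP V1).
have nZL : L \subset 'N(Z) := char_norm_trans (center_char R0) nRL.
have derL : L^`(1) \subset 'C_L(Z).
  rewrite subsetI der_sub /= -(ker_conj_aut 'Z(R0)%G) ker_trivg_morphim.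
  rewrite (subset_trans (der_sub 1 L) nZL) /= morphim_der //.
  have abfL : abelian (conj_aut 'Z(R0) @* L).
    exact: abelianS (Aut_conj_aut _ _) (Aut_cyclic_abelian cycZ).
  by rewrite (derG1P abfL).
set C := 'C_L(Z).
have sCL : C \subset L := subsetIl _ _.
have nsCL : C <| L by rewrite /C -{2}(setIidPl nZL) subcent_normal.
have aC : a.-group C.
  apply: b'a (subset_trans sCL sLH) _.
  have [S0 sylS0] := Sylow_exists b C.
  have [sS0C bS0 _] := and3P sylS0.
  have sS0H := subset_trans sS0C (subset_trans sCL sLH).
  have cS0Z : S0 \subset 'C(Z) := subset_trans sS0C (subsetIr _ _).
  have sZH : Z \subset H := subset_trans sZR sRH.
  case: (crossB sS0H sZH bS0 (pgroupS sZR aR) cS0Z) => [S01|Z1]; last first.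
    by case/eqP: ntZ; exact: Z1.
  by move: sylS0; rewrite /pHall S01 indexg1 => /and3P[].
have [T sylT] := Sylow_exists a L.
have [sTL aT _] := and3P sylT.
have sCT : C \subset T := subset_trans (pcore_max aC nsCL) (pcore_sub_Hall sylT).
have sRT : R0 \subset T := subset_trans (pcore_max aR nsRL) (pcore_sub_Hall sylT).
have nsTL : T <| L.
  by apply: sub_der1_normal => //; apply: subset_trans derL sCT.
have nPT : T \subset 'N(P) := subset_trans sTL nPL.
have nsPTH : P <*> T <| H.
  rewrite /normal join_subG sPH (subset_trans sTL sLH) /= -{1}defPL mul_subG //.
    exact: subset_trans (joing_subl _ _) (normG _).
  by rewrite normsY // normal_norm.
have sPTK : P <*> T \subset K.
  have nPPT : P <*> T \subset 'N(P) by rewrite join_subG normG.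
  rewrite -(quotientSGK nPPT sPK) defKP pcore_max //.
    by rewrite /= quotientYidl // quotient_pgroup.
  by rewrite /=; apply: quotient_normal.
have sTK : T \subset K := subset_trans (joing_subr _ _) sPTK.
have eqRT : R0 :=: T.
  apply/eqP; rewrite eqEcard sRT (card_Hall sylR) -(part_pnat_id aT).
  by rewrite dvdn_leq ?partn_dvd ?cardSg ?cardG_gt0 // part_gt0.
have sylRL : a.-Sylow(L) R0 by rewrite eqRT.
have [eqLR | neLR] := eqVneq (L : {set gT}) R0.
  left; have eKH : K :=: H by rewrite -defPR -defPL eqLR.
  by exists P, R0; rewrite -eKH.
have [sRL' _ aLR] := and3P sylRL.
have hallR : Hall L R0 by rewrite /Hall sRL (pnat_coprime aR aLR).
have [S] := splitsP (SchurZassenhaus_split hallR nsRL).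
case/complP => tiRS defRS0.
have defRS : R0 * S = L := defRS0.
have sSL : S \subset L by rewrite -defRS mulG_subr.
have sSH := subset_trans sSL sLH.
have defL : R0 ><| S = L by rewrite sdprodE // (subset_trans sSL nRL).
have bS : b.-group S by apply: a'b sSH _; rewrite /pgroup (index_sdprod defL).
have ntS : S :!=: 1.
  by apply: contraNneq neLR => S1; rewrite -defRS S1 mulg1.
have frobL : [Frobenius L = R0 ><| S].
  apply/Frobenius_semiregularP => // x /setD1P[ntx Sx].
  have sCR : 'C_R0[x] \subset R0 := subsetIl _ _.
  have Hx : <[x]> \subset H by rewrite cycle_subG (subsetP sSH).
  have := crossA (subset_trans sCR sRH) Hx (pgroupS sCR aR).
  have bx : b.-group <[x]> by apply: pgroupS bS; rewrite cycle_subG.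
  case/(_ bx) => [|//|]; first by rewrite cent_cycle subsetIr.
  by move/(congr1 val)/eqP => x1; case/negP: ntx; rewrite -cycle_eq1; exact: x1.
have injf : 'injm (restrm nPL (coset P)).
  by rewrite ker_restrm ker_coset setIC tiPL.
have := injm_Frobenius (subxx L) injf frobL.
rewrite !morphim_restrm setIid (setIidPr sRL) (setIidPr sSL).
move=> frobHP0; have frobHP : [Frobenius (L / P) = (R0 / P) ><| (S / P)] := frobHP0.
rewrite -(quotientMidl P R0) defPR -(quotientMidl P L) defPL in frobHP.
right; exists P, K; split => //.
  exists (S / P)%G; split => //; exact: quotient_pgroup.
by exists R0.
Qed.
End Main.

Lemma FrobW_type (gT : finGroupType) (H : {group gT}) x y :
  Frobenius_of_type H x y -> [Frobenius H].
Proof. by case=> K [U [f _ _]]; apply: FrobeniusW f. Qed.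

Lemma two_FrobW_type (gT : finGroupType) (H : {group gT}) x y z :
  two_Frobenius_of_type H x y z -> two_Frobenius H.
Proof.
case=> F1 [F2 [n1 n2 [U [fU _ _]] [W [fW _ _]]]].
by exists F1, F2; split => //; apply: FrobeniusWker; [exact: fU | exact: fW].
Qed.

Theorem lemma1p1 (gT : finGroupType) (H : {group gT}) (r p : nat) :
  prime r -> prime p -> r != p ->
  (forall q, (q \in \pi(#|H|)) = (q == r) || (q == p)) ->
  cpg_adj H r p ->
  [/\ [Frobenius H] \/ two_Frobenius H,
      (exists P : {group gT}, [/\ P <| H, p.-group P & P :!=: 1]) ->
        Frobenius_of_type H r p \/ two_Frobenius_of_type H p r p,
      (exists N : {group gT}, [/\ N <| H, r.-group (H / N) & H / N :!=: 1]) ->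
        Frobenius_of_type H r p \/ two_Frobenius_of_type H r p r &
      (exists P : {group gT}, [/\ P <| H, p.-group P & P :!=: 1]) ->
      (exists N : {group gT}, [/\ N <| H, r.-group (H / N) & H / N :!=: 1]) ->
        Frobenius_of_type H r p].
Proof.
move=> pr_r pr_p nrp piH [_ _ _ noel0].
have npr : p != r by rewrite eq_sym.
have noel : forall x, x \in H -> #[x] != (r * p)%N.
  by move=> x Hx; apply/eqP => ox; apply: noel0; exists x.
have noel' : forall x, x \in H -> #[x] != (p * r)%N by move=> x; rewrite mulnC; apply: noel.
have piH1 : forall q, q \in \pi(#|H|) -> (q == r) || (q == p) by move=> q; rewrite piH.
have piH2 : forall q, q \in \pi(#|H|) -> (q == p) || (q == r) by move=> q; rewrite piH orbC.
have rH : r %| #|H|.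
  have : r \in \pi(#|H|) by rewrite piH eqxx.
  by rewrite mem_primes => /and3P[].
have pH : p %| #|H|.
  have : p \in \pi(#|H|) by rewrite piH eqxx orbT.
  by rewrite mem_primes => /and3P[].
have solH : solvable H.
  apply: Burnside_p_a_q_b.
  have : {subset primes #|H| <= [:: r; p]}.
    move=> q qH; have : q \in \pi(#|H|) by [].
    by rewrite piH !inE.
  by move/(@uniq_leq_size _ _ _ (primes_uniq _)).
have ntH : H :!=: 1.
  apply: contraTneq rH => ->; rewrite cards1 dvdn1.
  by apply/eqP => r1; rewrite r1 in pr_r.
have Mrp := mainM pr_r pr_p nrp piH1 rH solH noel.
have Mpr := mainM pr_p pr_r npr piH2 pH solH noel'.
have Op_of (P : {group gT}) : [/\ P <| H, p.-group P & P :!=: 1] -> 'O_p(H) != 1.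
  case=> nsPH pP ntP; apply: contraNneq ntP => Op1.
  by rewrite -subG1 -Op1 pcore_max.
have Oeither : 'O_p(H) != 1 \/ 'O_p(H) = 1 /\ 'O_r(H) != 1.
  have [Op1 | ntOp] := eqVneq 'O_p(H) 1; last by left.
  by right; split => //; apply: L0 solH ntH piH1 Op1.
split.
- case: Oeither => [/Mrp | [_ /Mpr]] [] F.
  + by left; apply: FrobW_type F.
  + by right; apply: two_FrobW_type F.
  + by left; apply: FrobW_type F.
  + by right; apply: two_FrobW_type F.
- by case=> P /Op_of /Mrp.
- case=> N [nsNH rHN ntHN]; case: Oeither => [/Mrp | [_ /Mpr]] [] F.
  + by left.
  + by case/eqP: ntHN; apply: noquot_2Frob npr F nsNH rHN.
  + by case/eqP: ntHN; apply: noquot_Frob npr F nsNH rHN.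
  + by right.
case=> P /Op_of /Mrp [] // F [N [nsNH rHN ntHN]].
by case/eqP: ntHN; apply: noquot_2Frob npr F nsNH rHN.
Qed.
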